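(* A curve $u\in C^1(\mathbb{R}/\mathbb{Z},\mathbb{R}^n)$ is injective and regular (i.e. $\min_{\mathbb{R}/\mathbb{Z}}|u'|>0$) if and only if $\mathrm{bil}(u)<\infty$. Moreover, if $\mathrm{bil}(u)<\infty$, then $\mathrm{bil}(\tilde u)\le2\,\mathrm{bil}(u)$ for every $\tilde u\in C^1(\mathbb{R}/\mathbb{Z},\mathbb{R}^n)$ with \[\|(\tilde u-u)'\|_{L^\infty}\le\frac1{2\,\mathrm{bil}(u)}.\]
   Context: $\mathrm{bil}(u)=\sup_{x,y\in\mathbb{R}/\mathbb{Z},\,x\ne y}\frac{|x-y|}{|u(x)-u(y)|}$, where $|x-y|=\min_{k\in\mathbb{Z}}|x-y-k|$ is the distance in $\mathbb{R}/\mathbb{Z}$. *)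

(* Defs.v *)
From HB Require Import structures.
From mathcomp Require Import all_boot all_order all_algebra.
From mathcomp Require Import all_classical all_reals all_analysis.
Set Implicit Arguments. Unset Strict Implicit. Unset Printing Implicit Defensive.
Import Order.TTheory GRing.Theory Num.Theory.
Import numFieldNormedType.Exports.
Local Open Scope classical_set_scope.
Local Open Scope ring_scope.

(* Euclidean norm on R^n (the library norm on 'rV is the max norm). *)
Definition enorm {R : realType} {n : nat} (v : 'rV[R]_n) : R :=
  Num.sqrt (\sum_(i < n) v ord0 i ^+ 2).

(* distance in R/Z between the classes of x and y: min_k |x - y - k| *)
Definition circ_dist {R : realType} (x y : R) : R :=
  inf (range (fun k : int => `|x - y - k%:~R|)).

(* u is a C^1 map R/Z -> R^n, i.e. a 1-periodic C^1 map R -> R^n *)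
Definition C1_periodic {R : realType} {n : nat} (u : R -> 'rV[R]_n) : Prop :=
  (forall x, u (x + 1) = u x) /\
  (forall x, derivable u x 1) /\
  continuous (fun x => 'D_1 u x).

Definition circ_injective {R : realType} {n : nat} (u : R -> 'rV[R]_n) : Prop :=
  forall x y : R, circ_dist x y != 0 -> u x != u y.

(* regular: |u'| > 0 everywhere (min over the compact R/Z is positive) *)
Definition regular {R : realType} {n : nat} (u : R -> 'rV[R]_n) : Prop :=
  forall x : R, 0 < enorm ('D_1 u x).

Definition bil_ratio {R : realType} {n : nat} (u : R -> 'rV[R]_n) (x y : R)
  : \bar R :=
  if u x == u y then +oo%E else (circ_dist x y / enorm (u x - u y))%:E.

Definition bil {R : realType} {n : nat} (u : R -> 'rV[R]_n) : \bar R :=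
  ereal_sup [set r | exists x y : R, circ_dist x y != 0 /\ r = bil_ratio u x y].

(* Main.v *)
Require Import Defs.
From HB Require Import structures.
From mathcomp Require Import all_boot all_order all_algebra.
From mathcomp Require Import all_classical all_reals all_analysis.
From mathcomp Require Import ring lra.
Import Order.TTheory GRing.Theory Num.Theory.
Import numFieldNormedType.Exports.
Local Open Scope classical_set_scope.
Local Open Scope ring_scope.
Set Implicit Arguments. Unset Strict Implicit. Unset Printing Implicit Defensive.

Section E.
Context {R : realType} {n : nat}.
Implicit Types a b v : 'rV[R]_n.

Definition dot a b : R := \sum_(i < n) a ord0 i * b ord0 i.

Lemma enorm_ge0 v : 0 <= enorm v.
Proof. exact: sqrtr_ge0. Qed.

Lemma enorm_sq v : enorm v ^+ 2 = \sum_(i < n) v ord0 i ^+ 2.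
Proof. by rewrite /enorm sqr_sqrtr // sumr_ge0 // => i _; rewrite sqr_ge0. Qed.

Lemma CS_sq a b : dot a b ^+ 2 <= enorm a ^+ 2 * enorm b ^+ 2.
Proof.
rewrite !enorm_sq /dot.
set A := \sum_(i < n) _ ^+ 2; set B := \sum_(i < n) b ord0 i ^+ 2.
set S := \sum_(i < n) _.
have B0 : 0 <= B by rewrite sumr_ge0 // => i _; rewrite sqr_ge0.
have [Bz|Bp] := eqVneq B 0.
  have bz : forall i, b ord0 i = 0.
    move=> i; apply/eqP; rewrite -sqrf_eq0; apply/eqP.
    by apply: (psumr_eq0P _ Bz) => // j _; rewrite sqr_ge0.
  rewrite /S big1 ?expr0n ?Bz ?mulr0 // => i _; by rewrite bz mulr0.
have Bpos : 0 < B by rewrite lt_def Bp B0.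
have key : \sum_(i < n) (a ord0 i * B - S * b ord0 i) ^+ 2 = B * (A * B - S ^+ 2).
  transitivity (\sum_(i < n) (a ord0 i ^+ 2 * B ^+ 2 - (a ord0 i * b ord0 i) * (2 * B * S) + b ord0 i ^+ 2 * S ^+ 2)).
    by apply: eq_bigr => i _; ring.
  rewrite big_split sumrB -!mulr_suml -/A -/B -/S /=; clearbody A B S; ring.
have : 0 <= B * (A * B - S ^+ 2) by rewrite -key sumr_ge0 // => i _; rewrite sqr_ge0.
by rewrite pmulr_rge0 // subr_ge0.
Qed.

Lemma CS a b : dot a b <= enorm a * enorm b.
Proof.
apply: (le_trans (ler_norm _)).
have e0 : 0 <= enorm a * enorm b by rewrite mulr_ge0 // enorm_ge0.
rewrite -[X in _ <= X](ger0_norm e0) -!sqrtr_sqr ler_sqrt; last by rewrite sqr_ge0.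
rewrite exprMn; exact: CS_sq.
Qed.

Lemma enormD a b : enorm (a + b) <= enorm a + enorm b.
Proof.
rewrite -(ger0_norm (addr_ge0 (enorm_ge0 a) (enorm_ge0 b))) -sqrtr_sqr /enorm ler_sqrt; last by rewrite sqr_ge0.
rewrite -/(enorm _) -/(enorm _).
have -> : \sum_(i < n) (a + b) ord0 i ^+ 2 = enorm a ^+ 2 + 2 * dot a b + enorm b ^+ 2.
  rewrite !enorm_sq /dot mulr_sumr -!big_split /=; apply: eq_bigr => i _; rewrite mxE; ring.
have := CS a b; nra.
Qed.

Lemma enormN a : enorm (- a) = enorm a.
Proof. by rewrite /enorm; congr Num.sqrt; apply: eq_bigr => i _; rewrite mxE sqrrN. Qed.

Lemma enormZ (c : R) a : enorm (c *: a) = `|c| * enorm a.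
Proof.
rewrite /enorm -sqrtr_sqr -sqrtrM ?sqr_ge0 // mulr_sumr; congr Num.sqrt.
by apply: eq_bigr => i _; rewrite mxE exprMn.
Qed.

Lemma enormB a b : enorm (a - b) = enorm (b - a).
Proof. by rewrite -enormN opprB. Qed.

Lemma enorm_rev a b : enorm a - enorm b <= enorm (a - b).
Proof. have := enormD (a - b) b; rewrite subrK; lra. Qed.

Lemma enorm_eq0 a : (enorm a == 0) = (a == 0).
Proof.
apply/eqP/eqP => [H|->]; last first.
  by rewrite /enorm big1 ?sqrtr0 // => i _; rewrite mxE expr0n.
apply/matrixP => i j; rewrite (ord1 i) mxE; apply/eqP; rewrite -sqrf_eq0; apply/eqP.
have H2 : \sum_(k < n) a ord0 k ^+ 2 = 0 by rewrite -enorm_sq H expr0n.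
by apply: (psumr_eq0P _ H2) => // k _; rewrite sqr_ge0.
Qed.

Lemma coord_le_enorm a i : `|a ord0 i| <= enorm a.
Proof.
rewrite -sqrtr_sqr ler_sqrt; last by rewrite sumr_ge0 // => k _; rewrite sqr_ge0.
by rewrite (bigD1 i) //= lerDl sumr_ge0 // => k _; rewrite sqr_ge0.
Qed.

Lemma enorm_le_norm a : enorm a <= n%:R * `|a|.
Proof.
have a0 : 0 <= `|a| by [].
rewrite -(ger0_norm (mulr_ge0 (ler0n _ n) a0)) -sqrtr_sqr /enorm ler_sqrt; last by rewrite sqr_ge0.
apply: (@le_trans _ _ (\sum_(i < n) `|a| ^+ 2)).
  apply: ler_sum => i _; rewrite -real_normK ?num_real //; apply: lerXn2r => //; rewrite ?nnegrE //.
  rewrite [leRHS]/Num.Def.normr/= mx_normrE; apply: le_trans; last exact: (le_bigmax _ _ (ord0, i)).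
  by [].
rewrite sumr_const card_ord exprMn -[_ *+ n]mulr_natl; apply: ler_wpM2r; first by rewrite sqr_ge0.
rewrite -natrX ler_nat; case: n => // k; rewrite expnS leq_pmulr //.
Qed.

End E.

Section CD.
Context {R : realType}.

Lemma cd_min (x y : R) : exists k : int,
  [/\ circ_dist x y = `|x - y - k%:~R|, `|x - y - k%:~R| <= 2^-1 &
      forall j : int, `|x - y - k%:~R| <= `|x - y - j%:~R| ].
Proof.
set d := x - y.
have h1 := floor_le d; have h2 := floorD1_gt d.
have lb : forall j : int, Num.min (d - (Num.floor d)%:~R) ((Num.floor d + 1)%:~R - d) <= `|d - j%:~R|.
  move=> j.
  have [jf|fj] := lerP j (Num.floor d).
    rewrite ge_min; apply/orP; left.
    have : j%:~R <= (Num.floor d)%:~R :> R by rewrite ler_int.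
    move=> jf'; rewrite ger0_norm; lra.
  have : (Num.floor d + 1)%:~R <= j%:~R :> R by rewrite ler_int lezD1.
  rewrite ge_min; move=> jf'; apply/orP; right; rewrite ler0_norm; lra.
have key : exists k : int, `|d - k%:~R| = Num.min (d - (Num.floor d)%:~R) ((Num.floor d + 1)%:~R - d)
   /\ `|d - k%:~R| <= 2^-1.
  have [c|c] := lerP (d - (Num.floor d)%:~R) ((Num.floor d + 1)%:~R - d).
    exists (Num.floor d); rewrite ger0_norm ?subr_ge0 //; split => //.
    move: c; rewrite intrD; lra.
  exists (Num.floor d + 1); rewrite ler0_norm; last by lra.
  split; first by rewrite opprB.
  move: c; rewrite intrD; lra.
case: key => k [kmin khalf]; exists k; split => //; last by move=> j; rewrite kmin lb.
apply/eqP; rewrite eq_le; apply/andP; split.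
  apply: ge_inf; first by exists 0 => z [j _ <-].
  by exists k.
apply: lb_le_inf; first by exists `|d|, 0; rewrite ?subr0.
by move=> z [j _ <-]; rewrite kmin lb.
Qed.

Lemma cd_ge0 (x y : R) : 0 <= circ_dist x y.
Proof. by have [k [-> _ _]] := cd_min x y. Qed.

Lemma cd_le (x y : R) (j : int) : circ_dist x y <= `|x - y - j%:~R|.
Proof. by have [k [-> _ H]] := cd_min x y. Qed.

Lemma cd_small (x h : R) : `|h| <= 2^-1 -> circ_dist (x + h) x = `|h|.
Proof.
move=> hh; have [k [-> _ H]] := cd_min (x + h) x.
have E : x + h - x = h by rewrite addrAC subrr add0r.
apply/eqP; rewrite eq_le; apply/andP; split.
  by have := H 0; rewrite mulr0z subr0 E.
rewrite E.
have [->|k0] := eqVneq k 0; first by rewrite mulr0z subr0.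
have k1 : 1 <= `|k%:~R : R|.
  by rewrite -intr_norm -(mulr1z 1) ler_int -gtz0_ge1 normr_gt0.
have := lerB_dist (k%:~R : R) h; rewrite distrC; lra.
Qed.

End CD.

Section Per.
Context {R : realType} {n : nat}.
Implicit Types u : R -> 'rV[R]_n.

Lemma per_int u : (forall x, u (x + 1) = u x) -> forall (k : int) x, u (x + k%:~R) = u x.
Proof.
move=> P; have Pm : forall x, u (x - 1) = u x by move=> x; rewrite -{2}(subrK 1 x) P.
have Hn : forall (m : nat) x, u (x + m%:R) = u x.
  by elim=> [|m IH] x; rewrite ?addr0 // -natr1 addrA P IH.
have Hm : forall (m : nat) x, u (x - m%:R) = u x.
  by elim=> [|m IH] x; rewrite ?subr0 // -natr1 opprD addrA Pm IH.
by case=> m x; rewrite ?NegzE ?mulrNz /= ?Hn ?Hm.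
Qed.

Lemma per_D u : (forall x, u (x + 1) = u x) -> forall x, 'D_1 u (x + 1) = 'D_1 u x.
Proof.
move=> P x; rewrite /derive; congr lim.
have -> : (fun h : R => h^-1 *: ((u \o shift (x + 1)) h%:A - u (x + 1))) =
          (fun h : R => h^-1 *: ((u \o shift x) h%:A - u x)).
  by apply: funext => h /=; rewrite addrA !P.
by [].
Qed.

End Per.

Section MVI.
Context {R : realType} {n : nat}.

Lemma MVI_lt (w dw : R -> 'rV[R]_n) (M : R) :
  (forall (t : R) (i : 'I_n), is_derive t (1 : R) (fun s => w s ord0 i) (dw t ord0 i)) ->
  forall x y, y < x -> (forall t, y < t < x -> enorm (dw t) <= M) ->
  enorm (w x - w y) <= M * (x - y).
Proof.
move=> Dw x y yx HM.
set e := w x - w y.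
pose phi : R -> R := \sum_(i < n) (fun s : R => e ord0 i * w s ord0 i).
have phiE : forall s, phi s = \sum_(i < n) e ord0 i * w s ord0 i.
  by move=> s; rewrite /phi fct_sumE.
have Dphi : forall t : R, is_derive t (1 : R) phi (\sum_(i < n) e ord0 i * dw t ord0 i).
  by move=> t; rewrite /phi; apply: is_derive_sum.
have cphi : {within `[y, x], continuous phi}.
  apply: derivable_within_continuous => t _; exact: (@ex_derive _ _ _ _ _ _ _ (Dphi t)).
have [c cin Hc] := MVT yx (fun t _ => Dphi t) cphi.
have HMc : enorm (dw c) <= M by apply: HM; move: cin; rewrite in_itv.
have E1 : phi x - phi y = enorm e ^+ 2.
  rewrite !phiE -sumrB enorm_sq; apply: eq_bigr => i _.
  by rewrite -mulrBr /e [in RHS]mxE [in RHS]mxE mxE mxE.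
have E2 : \sum_(i < n) e ord0 i * dw c ord0 i <= enorm e * M.
  apply: le_trans (CS e (dw c)) _; apply: ler_wpM2l; [exact: enorm_ge0|exact: HMc].
have ee := enorm_ge0 e.
have xy0 : 0 < x - y by rewrite subr_gt0.
have H : enorm e ^+ 2 <= enorm e * (M * (x - y)).
  rewrite -E1 Hc mulrA; apply: ler_wpM2r => //; exact: ltW.
have [e0|e0] := eqVneq (enorm e) 0; first by rewrite e0 mulr_ge0 ?(le_trans (enorm_ge0 _) HMc) ?ltW.
by move: H; rewrite expr2 ler_pM2l // lt_def e0 ee.
Qed.

Lemma MVI (w dw : R -> 'rV[R]_n) (M : R) :
  (forall (t : R) (i : 'I_n), is_derive t (1 : R) (fun s => w s ord0 i) (dw t ord0 i)) ->
  (forall t, enorm (dw t) <= M) ->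
  forall x y, enorm (w x - w y) <= M * `|x - y|.
Proof.
move=> Dw HM x y.
have [yx|xy|->] := ltgtP y x.
- by rewrite gtr0_norm ?subr_gt0 //; apply: MVI_lt.
- by rewrite enormB distrC gtr0_norm ?subr_gt0 //; apply: MVI_lt.
- rewrite !subrr normr0 mulr0 (_ : enorm 0 = 0) //.
  by apply/eqP; rewrite enorm_eq0.
Qed.

Lemma MVI_loc (w dw : R -> 'rV[R]_n) (M : R) :
  (forall (t : R) (i : 'I_n), is_derive t (1 : R) (fun s => w s ord0 i) (dw t ord0 i)) ->
  forall x y, (forall t, `|t - x| <= `|y - x| -> enorm (dw t) <= M) ->
  enorm (w y - w x) <= M * `|y - x|.
Proof.
move=> Dw x y HM.
have [xy|yx|->] := ltgtP x y.
- rewrite gtr0_norm ?subr_gt0 //; apply: MVI_lt => // t /andP[t1 t2]; apply: HM.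
  rewrite !gtr0_norm ?subr_gt0 //; lra.
- rewrite enormB distrC gtr0_norm ?subr_gt0 //; apply: MVI_lt => // t /andP[t1 t2]; apply: HM.
  rewrite !ltr0_norm ?subr_lt0 //; lra.
- rewrite !subrr normr0 mulr0 (_ : enorm 0 = 0) //.
  by apply/eqP; rewrite enorm_eq0.
Qed.

End MVI.

Section Bil.
Context {R : realType} {n : nat}.
Implicit Types u : R -> 'rV[R]_n.
Local Open Scope ereal_scope.

Lemma bil_le u (K : R) :
  (forall x y, circ_dist x y != 0%R -> u x != u y /\ (circ_dist x y <= K * enorm (u x - u y))%R) ->
  bil u <= K%:E.
Proof.
move=> H; apply: ub_ereal_sup => r [x [y [cd ->]]].
have [uxy Hc] := H x y cd.
rewrite /bil_ratio (negbTE uxy) lee_fin.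
have ep : (0 < enorm (u x - u y))%R.
  by rewrite lt_def enorm_ge0 andbT enorm_eq0 subr_eq0.
by rewrite ler_pdivrMr.
Qed.

Lemma bil_ub u : bil u < +oo -> exists B : R,
  [/\ bil u = B%:E, (0 < B)%R &
   forall x y, circ_dist x y != 0%R -> u x != u y /\ (circ_dist x y <= B * enorm (u x - u y))%R].
Proof.
move=> Hb.
have mem : forall x y, circ_dist x y != 0%R -> bil_ratio u x y <= bil u.
  by move=> x y cd; apply: ereal_sup_ubound; exists x, y.
have cdh : (circ_dist (0 + 2^-1)%R 0 = 2^-1 :> R)%R.
  by rewrite cd_small ger0_norm // ?invr_ge0.
have cdh0 : circ_dist (0 + 2^-1)%R 0 != 0%R :> R by rewrite cdh invr_eq0 pnatr_eq0.
have r0 := mem _ _ cdh0.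
have neq : u (0 + 2^-1)%R != u 0%R.
  apply/negP => /eqP E; move: r0; rewrite /bil_ratio E eqxx leye_eq => /eqP Eb.
  by move: Hb; rewrite Eb ltxx.
move: r0; rewrite /bil_ratio (negbTE neq) => r0.
have ep : (0 < enorm (u (0 + 2^-1)%R - u 0%R))%R.
  by rewrite lt_def enorm_ge0 andbT enorm_eq0 subr_eq0.
have fin : bil u \is a fin_num.
  rewrite fin_numE; apply/andP; split.
    by apply/eqP => E; move: r0; rewrite E leeNy_eq.
  by rewrite lt_eqF.
exists (fine (bil u)); split; first by rewrite fineK.
  rewrite -lte_fin fineK //; apply: lt_le_trans r0; rewrite lte_fin cdh divr_gt0 //.
move=> x y cd; have := mem x y cd; rewrite /bil_ratio.
case: eqP => [E|E].
  by rewrite leye_eq => /eqP Eb; move: Hb; rewrite Eb ltxx.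
rewrite -(fineK fin) lee_fin => H; split; first by apply/eqP.
have ep' : (0 < enorm (u x - u y))%R.
  by rewrite lt_def enorm_ge0 andbT enorm_eq0 subr_eq0; apply/eqP.
by rewrite -ler_pdivrMr.
Qed.

End Bil.

Section Part2.
Context {R : realType} {n : nat}.
Implicit Types u : R -> 'rV[R]_n.

Lemma comp_D u t (i : 'I_n) : derivable u t (1 : R) ->
  is_derive t (1 : R) (fun s => u s ord0 i) ('D_1 u t ord0 i).
Proof.
move=> d; have dc := (derivable_mxP u t 1).1 d ord0 i.
rewrite (derive_mx d) mxE; exact: derivableP.
Qed.

Lemma part2_core u ut (B : R) : C1_periodic u -> C1_periodic ut -> 0 < B ->
  (forall x y, circ_dist x y != 0 -> circ_dist x y <= B * enorm (u x - u y)) ->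
  (forall x, enorm ('D_1 ut x - 'D_1 u x) <= 1 / (2 * B)) ->
  forall x y, circ_dist x y != 0 -> ut x != ut y /\ circ_dist x y <= (2 * B) * enorm (ut x - ut y).
Proof.
move=> [Pu [Du _]] [Put [Dut _]] B0 Hu Hd x y cd.
have [k [E _ _]] := cd_min x y.
set y' := y + k%:~R.
have uy : u y' = u y by rewrite /y' per_int.
have uty : ut y' = ut y by rewrite /y' per_int.
have Ecd : circ_dist x y = `|x - y'| by rewrite E /y' opprD addrA.
have H1 := Hu x y cd.
have Dw : forall (t : R) (i : 'I_n), is_derive t (1:R) (fun s => (ut s - u s) ord0 i) (('D_1 ut t - 'D_1 u t) ord0 i).
  move=> t i.
  have -> : ('D_1 ut t - 'D_1 u t) ord0 i = 'D_1 ut t ord0 i - 'D_1 u t ord0 i by rewrite !mxE.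
  have -> : (fun s => (ut s - u s) ord0 i) = (fun s => ut s ord0 i) - (fun s => u s ord0 i).
    by apply: funext => s; rewrite !mxE.
  by apply: is_deriveB; apply: comp_D.
have H2 : enorm ((ut x - u x) - (ut y' - u y')) <= 1 / (2 * B) * `|x - y'|.
  exact: (MVI Dw Hd x y').
have spl : ut x - ut y' = (u x - u y') + ((ut x - u x) - (ut y' - u y')).
  by apply/matrixP => a b; rewrite !mxE; ring.
have E3 : ut x - ut y' - ((ut x - u x) - (ut y' - u y')) = u x - u y' by rewrite {1}spl addrK.
set W := (ut x - u x) - (ut y' - u y').
have H3 := enormD (ut x - ut y') (- W).
rewrite E3 enormN in H3.
have cdp : 0 < circ_dist x y by rewrite lt_def cd cd_ge0.
rewrite -Ecd in H2.
have H5 : circ_dist x y / B <= enorm (u x - u y') by rewrite uy ler_pdivrMr // mulrC.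
have H4 : circ_dist x y / (2 * B) <= enorm (ut x - ut y).
  rewrite -uty.
  have -> : circ_dist x y / (2 * B) = circ_dist x y / B - circ_dist x y / (2 * B).
    by field; rewrite gt_eqF.
  move: H2; rewrite mul1r mulrC => H2.
  lra.
split.
  rewrite -subr_eq0 -enorm_eq0; apply/negP => /eqP E0; move: H4; rewrite E0.
  by apply/negP; rewrite -ltNge divr_gt0 // mulr_gt0.
by rewrite mulrC -ler_pdivrMr ?mulr_gt0.
Qed.
End Part2.

Section Part1rev.
Context {R : realType} {n : nat}.
Implicit Types u : R -> 'rV[R]_n.

Lemma part1_rev u : C1_periodic u -> (bil u < +oo)%E -> circ_injective u /\ regular u.
Proof.
move=> [Pu [Du _]] Hb; have [B [_ B0 HB]] := bil_ub Hb.
split; first by move=> x y cd; have [] := HB x y cd.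
move=> x; rewrite lt_def enorm_ge0 andbT; apply/negP => /eqP.
move/eqP; rewrite enorm_eq0 => /eqP D0.
have C := cvg_toP (Du x) erefl.
rewrite -/(derive u x 1) D0 in C.
set eps := (B * n%:R + 1)^-1.
have Bn : 0 <= B * n%:R by rewrite mulr_ge0 // ltW.
have epsp : 0 < eps by rewrite invr_gt0; lra.
move/cvgrPdist_lt : C => /(_ eps epsp) N1.
have N2 : \forall h \near (0 : R)^', `|h| < 2^-1 by apply: dnbhs0_lt; rewrite invr_gt0.
have N3 := nbhs_dnbhs_neq (0 : R).
have [h [H1 H2 H3]] : exists h : R, [/\ `|0 - h^-1 *: ((u \o shift x) h%:A - u x)| < eps, `|h| < 2^-1 & h != 0].
  have : \forall h \near (0:R)^', [/\ `|0 - h^-1 *: ((u \o shift x) h%:A - u x)| < eps, `|h| < 2^-1 & h != 0].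
    by apply: filterS3 N1 N2 N3 => h a b c; split.
  exact: filter_ex.
move: H1; rewrite /= sub0r normrN => H1.
have hp : 0 < `|h| by rewrite normr_gt0.
have cdh : circ_dist (x + h) x = `|h| by rewrite cd_small // ltW.
have [_ Hc] := HB (x + h) x ltac:(by rewrite cdh gt_eqF).
have E : u (x + h) - u x = h *: (h^-1 *: ((u \o shift x) (h *: 1) - u x)).
  by rewrite scalerA divff // scale1r /= -[h%:A]/(h * 1) mulr1 [h + x]addrC.
rewrite cdh E enormZ in Hc.
have H4 := enorm_le_norm (h^-1 *: ((u \o shift x) (h *: 1) - u x)).
set v := h^-1 *: _ in Hc H4 H1.
have vge : 0 <= `|v| by [].
have S1 : B * (`|h| * enorm v) <= B * (`|h| * (n%:R * `|v|)).
  by rewrite ler_pM2l // ler_pM2l.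
have S2 : `|v| * (B * `|h| * n%:R) <= eps * (B * `|h| * n%:R).
  by apply: ler_wpM2r; [rewrite mulr_ge0 // mulr_ge0 // ltW|exact: ltW].
have lt1 : B * n%:R * eps < 1 by rewrite /eps ltr_pdivrMr ?mul1r; lra.
have E1 : B * (`|h| * (n%:R * `|v|)) = `|v| * (B * `|h| * n%:R) by ring.
have E2 : eps * (B * `|h| * n%:R) = `|h| * (B * n%:R * eps) by ring.
have F : `|h| <= `|h| * (B * n%:R * eps).
  rewrite -E2; apply: (le_trans Hc); apply: (le_trans S1); by rewrite E1.
have key : forall a c : R, a <= a * c -> c < 1 -> 0 < a -> False by move=> a c; nra.
exact: (key _ _ F lt1 hp).
Qed.
End Part1rev.

Section Cont.
Context {R : realType} {n : nat}.

Lemma enorm_cont : continuous (@enorm R n).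
Proof.
move=> a.
have FF : Filter (nbhs a) by apply: nbhs_filter.
apply/cvgrPdist_lt => e e0.
have d0 : 0 < e / (n%:R + 1) by rewrite divr_gt0 // ltr_wpDl.
near=> b.
have Hb : `|a - b| < e / (n%:R + 1).
  by near: b; have := nbhsx_ballx a _ d0; rewrite -ball_normE.
have H1 : `|enorm a - enorm b| <= enorm (a - b).
  rewrite ler_norml; apply/andP; split; last exact: enorm_rev.
  by rewrite lerNl opprB enormB enorm_rev.
apply: (le_lt_trans H1); apply: (le_lt_trans (enorm_le_norm _)).
have: n%:R * `|a - b| <= n%:R * (e / (n%:R + 1)) by rewrite ler_wpM2l // ltW.
move=> H; apply: (le_lt_trans H).
rewrite mulrA ltr_pdivrMr ?ltr_wpDl //; nra.
Unshelve. all: by end_near. Qed.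

Lemma fst_cvg (p : R * R) : (fun q : R * R => q.1) @ p --> p.1.
Proof.
move=> A /= HA; exists (A, setT) => //=; first by split => //; exact: filterT.
by move=> [a b] [Aa _].
Qed.

Lemma snd_cvg (p : R * R) : (fun q : R * R => q.2) @ p --> p.2.
Proof.
move=> A /= HA; exists (setT, A) => //=; first by split => //; exact: filterT.
by move=> [a b] [_ Ab].
Qed.
End Cont.

Section Fwd.
Context {R : realType} {n : nat}.
Implicit Types u : R -> 'rV[R]_n.

Definition Fq u (q : R * R) : 'rV[R]_n :=
  if q.2 == 0 then 'D_1 u q.1 else q.2^-1 *: (u (q.1 + q.2) - u q.1).

Lemma enorm_dist (a b : 'rV[R]_n) : `|enorm a - enorm b| <= enorm (a - b).
Proof.
rewrite ler_norml; apply/andP; split; last exact: enorm_rev.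
by rewrite lerNl opprB enormB enorm_rev.
Qed.

Lemma u_cont u x : derivable u x (1 : R) -> {for x, continuous u}.
Proof. by move=> d; apply: differentiable_continuous; apply/derivable1_diffP. Qed.

Lemma Du_near u x0 (e : R) : continuous (fun x => 'D_1 u x) -> 0 < e ->
  exists2 d, 0 < d & forall s, `|s - x0| < d -> enorm ('D_1 u s - 'D_1 u x0) <= e.
Proof.
move=> Dc e0.
have e' : 0 < e / (n%:R + 1) by rewrite divr_gt0 // ltr_wpDl.
move/cvgrPdist_lt: (Dc x0) => /(_ _ e') /nbhs_ballP [d d0 Hd]; exists d => // s hs.
have := Hd s; rewrite -ball_normE /= distrC => /(_ hs) H.
apply: (le_trans (enorm_le_norm _)); rewrite distrC.
apply: (@le_trans _ _ (n%:R * (e / (n%:R + 1)))); first by rewrite ler_wpM2l // ltW.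
rewrite mulrA ler_pdivrMr ?ltr_wpDl //; nra.
Qed.

Lemma is_derive_mulc (c t : R) : is_derive t (1 : R) (fun s : R => s * c) c.
Proof.
have -> : (fun s : R => s * c) = c \*: id by apply: funext => s; rewrite /= mulrC.
rewrite -[X in is_derive _ _ _ X]mulr1; exact: is_deriveZ.
Qed.

Lemma G_cont0 u x0 : C1_periodic u ->
  (fun q => enorm (Fq u q)) @ (x0, 0) --> enorm (Fq u (x0, 0)).
Proof.
move=> [Pu [Du Dc]].
have FF : Filter (nbhs (x0, 0 : R)) by apply: nbhs_filter.
apply/cvgrPdist_le => e e0.
have [d d0 Hd] := Du_near x0 Dc e0.
have d2 : 0 < d / 2 by rewrite divr_gt0.
exists (ball x0 (d / 2), ball 0 (d / 2)) => /=; first by split; apply: nbhsx_ballx.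
move=> [x h] [/= Bx Bh]; rewrite -ball_normE /= in Bx Bh.
rewrite sub0r normrN in Bh.
apply: (le_trans (enorm_dist _ _)).
rewrite /Fq /= eqxx enormB.
case: ifPn => [/eqP h0|hne].
  by apply: Hd; rewrite distrC; lra.
pose w := fun s : R => u s - s *: 'D_1 u x0.
pose dw := fun s : R => 'D_1 u s - 'D_1 u x0.
have Dw : forall (t : R) (i : 'I_n), is_derive t (1 : R) (fun s => w s ord0 i) (dw t ord0 i).
  move=> t i.
  have -> : dw t ord0 i = 'D_1 u t ord0 i - 'D_1 u x0 ord0 i by rewrite /dw !mxE.
  have -> : (fun s => w s ord0 i) = (fun s => u s ord0 i) - (fun s => s * 'D_1 u x0 ord0 i).
    by apply: funext => s; rewrite /w !mxE.
  apply: is_deriveB; [exact: comp_D|exact: is_derive_mulc].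
have M := @MVI_loc R n w dw e Dw x (x + h).
have E : h^-1 *: (u (x + h) - u x) - 'D_1 u x0 = h^-1 *: (w (x + h) - w x).
  by apply/matrixP => a b; rewrite /w !mxE /=; field.
rewrite E enormZ.
have hp : 0 < `|h| by rewrite normr_gt0.
rewrite addrAC subrr add0r in M.
rewrite normrV ?unitfE // ler_pdivrMl //.
rewrite mulrC; apply: M => t Ht; apply: Hd.
have := ler_normD (t - x) (x - x0); rewrite addrA subrK [`|x - x0|]distrC; lra.
Qed.
Lemma G_contne u x0 h0 : C1_periodic u -> h0 != 0 ->
  (fun q => enorm (Fq u q)) @ (x0, h0) --> enorm (Fq u (x0, h0)).
Proof.
move=> [Pu [Du Dc]] h0n.
have FF : Filter (nbhs (x0, h0)) by apply: nbhs_filter.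
pose Ft := fun q : R * R => q.2^-1 *: (u (q.1 + q.2) - u q.1).
have c1 : (fun q : R * R => u (q.1 + q.2)) @ (x0, h0) --> u (x0 + h0).
  apply: (@cvg_comp _ _ _ (fun q : R * R => q.1 + q.2) u); first exact: add_continuous.
  exact: u_cont.
have c2 : (fun q : R * R => u q.1) @ (x0, h0) --> u x0.
  apply: (@cvg_comp _ _ _ (fun q : R * R => q.1) u); first exact: fst_cvg.
  exact: u_cont.
have c3 : (fun q : R * R => u (q.1 + q.2) - u q.1) @ (x0, h0) --> u (x0 + h0) - u x0.
  exact: (cvgB c1 c2).
have c4 : (fun q : R * R => q.2^-1) @ (x0, h0) --> h0^-1.
  by apply: cvgV => //; exact: snd_cvg.
have cFt : Ft @ (x0, h0) --> Ft (x0, h0) by exact: (cvgZ c4 c3).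
have cG : (enorm \o Ft) @ (x0, h0) --> enorm (Ft (x0, h0)).
  apply: (@cvg_comp _ _ _ Ft enorm _ _ _ cFt); exact: enorm_cont.
have EF : Fq u (x0, h0) = Ft (x0, h0) by rewrite /Fq /= (negbTE h0n).
rewrite EF; apply: cvg_trans cG; apply: near_eq_cvg.
have hp : 0 < `|h0| by rewrite normr_gt0.
exists (setT, ball h0 `|h0|) => /=; first by split; [exact: filterT|exact: nbhsx_ballx].
move=> [a b] [_ /= Bb]; rewrite -ball_normE /= in Bb.
have bn : b != 0 by apply/eqP => b0; move: Bb; rewrite b0 subr0 ltxx.
by rewrite /Fq /= (negbTE bn).
Qed.

Lemma G_cont u : C1_periodic u -> continuous (fun q => enorm (Fq u q)).
Proof.
move=> C [x0 h0]; have [->|h0n] := eqVneq h0 0; first exact: G_cont0.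
exact: G_contne.
Qed.
Lemma G_pos u a b : C1_periodic u -> circ_injective u -> regular u ->
  `|b| <= 2^-1 -> 0 < enorm (Fq u (a, b)).
Proof.
move=> C Inj Reg hb; rewrite /Fq /=.
case: ifPn => [_|bn]; first exact: Reg.
rewrite enormZ mulr_gt0 //; first by rewrite normr_gt0 invr_neq0.
have cdn : circ_dist (a + b) a != 0 by rewrite cd_small // normr_eq0.
have := Inj _ _ cdn.
by rewrite lt_def enorm_ge0 andbT enorm_eq0 subr_eq0.
Qed.

Lemma part1_fwd u : C1_periodic u -> circ_injective u -> regular u -> (bil u < +oo)%E.
Proof.
move=> C Inj Reg.
pose G := fun q => enorm (Fq u q).
pose K := [set` `[0 : R, 1]] `*` [set` `[- 2^-1 : R, 2^-1]].
have cK : compact K by apply: compact_setX; exact: segment_compact.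
have K0 : K !=set0.
  exists (0, 0); split; rewrite /= in_itv /= ?lexx ?ler01 //.
  by rewrite oppr_le0 invr_ge0 ler0n.
have cont : {within K, continuous G} by apply: continuous_subspaceT; exact: G_cont.
have [[a b] abK Hmin] := compact_EVT_min K0 cK cont.
have hb : `|b| <= 2^-1.
  move: abK; rewrite inE => -[_ /=]; rewrite in_itv /= => /andP[h1 h2].
  by rewrite ler_norml h1 h2.
set m := G (a, b).
have m0 : 0 < m by apply: G_pos.
apply: (le_lt_trans (bil_le (K := m^-1) _)); last exact: ltry.
move=> x y cd.
have [k [E Eh _]] := cd_min x y.
set f := Num.floor x.
set x1 := x - f%:~R.
set h := y + k%:~R - x.
have habs : `|h| = circ_dist x y by rewrite E -normrN /h; congr `|_|; ring.
have hn : h != 0 by rewrite -normr_eq0 habs.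
have hp : 0 < `|h| by rewrite normr_gt0.
have inK : (x1, h) \in K.
  rewrite inE; split; rewrite /= in_itv /=.
    have h1 := floor_le x; have h2 := floorD1_gt x; rewrite intrD in h2.
    rewrite /x1; apply/andP; split; lra.
  by rewrite -ler_norml habs E.
have Hm := Hmin _ inK.
have ux1 : u x1 = u x by rewrite /x1 -mulrNz; case: C => P _; rewrite per_int.
have ux1h : u (x1 + h) = u y.
  have -> : x1 + h = (y + k%:~R) + (- f)%:~R by rewrite /x1 /h intrN; ring.
  by case: C => P _; rewrite !per_int.
move: Hm; rewrite /G /Fq /= (negbTE hn) enormZ ux1 ux1h normrV ?unitfE // -/m => Hm.
have Hm' : m * `|h| <= enorm (u x - u y) by rewrite enormB -ler_pdivlMr // mulrC.
have ep : 0 < enorm (u x - u y) by apply: lt_le_trans Hm'; rewrite mulr_gt0.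
split.
  by rewrite -subr_eq0 -enorm_eq0 gt_eqF.
by rewrite -habs ler_pdivlMl // .
Qed.
End Fwd.

Unset Implicit Arguments.
Set Strict Implicit.

Theorem lemma3p6 (R : realType) (n : nat) (u : R -> 'rV[R]_n) :
  C1_periodic u ->
  ((circ_injective u /\ regular u) <-> (bil u < +oo)%E) /\
  ((bil u < +oo)%E ->
   forall ut : R -> 'rV[R]_n, C1_periodic ut ->
   (forall x : R, enorm ('D_1 ut x - 'D_1 u x) <= 1 / (2 * fine (bil u))) ->
   (bil ut <= 2%:E * bil u)%E).
Proof.
move=> C; split.
  split; [by move=> [I Rg]; exact: part1_fwd | exact: part1_rev].
move=> Hb ut Ct Hd.
have [B [EB B0 HB]] := bil_ub Hb.
rewrite EB /= in Hd; rewrite EB -EFinM.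
apply: bil_le; apply: (part2_core C Ct B0) => //.
by move=> x y cd; case: (HB x y cd).
Qed.
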